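(* Let $\mathcal{H}$ be a real separable Hilbert space, $t_0>0$, and let $(\Omega,\mathcal{F},\{\mathcal{F}_t\}_{t\geq t_0},\mathbb{P})$ be a filtered probability space carrying an $\mathcal{H}$-valued Brownian motion $W_X$. Assume $f:\mathcal{H}\to\mathbb{R}$ is convex, of class $\mathcal{C}^1$, with $L$-Lipschitz continuous gradient and $\operatorname{argmin}_{\mathcal{H}} f\neq\emptyset$, with minimum norm minimizer $x^*$; $\varepsilon:[t_0,+\infty)\to\mathbb{R}^+$ is nonincreasing, of class $\mathcal{C}^1$, with $\lim_{t\to+\infty}\varepsilon(t)=0$; $\delta>0$, $\lambda>0$; and $\sigma_X:[t_0,+\infty)\to\mathcal{L}(\mathcal{H},\mathcal{H})$ is measurable and square-integrable. Let $(X,Y)$ be a solution trajectory of \[ \begin{cases} dX(t)=Y(t)\,dt,\\ dY(t)=\big(-\delta\sqrt{\varepsilon(t)}\,Y(t)-\nabla f(X(t))-\varepsilon(t)X(t)\big)dt+\sigma_X(t)\,dW_X(t),\\ X(t_0)=X_0,\quad Y(t_0)=Y_0. \end{cases} \] Then for all $t\geq t_0$: \[ f(X(t))-\inf_{\mathcal{H}}f\leq \mathcal{E}(t,X(t),Y(t))+\frac{\varepsilon(t)}{2}\|x^*\|^2,\qquad \|X(t)-x_{\varepsilon(t)}\|^2\leq \frac{2\,\mathcal{E}(t,X(t),Y(t))}{\varepsilon(t)}. \] Therefore, $X(t)$ converges strongly to $x^*$ almost surely if $\lim_{t\to+\infty}\frac{\mathcal{E}(t,X(t),Y(t))}{\varepsilon(t)}=0$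 (almost surely).
   Context: $\varphi_t(x):=f(x)+\frac{\varepsilon(t)}{2}\|x\|^2$; $x_{\varepsilon(t)}:=\operatorname{argmin}_{\mathcal{H}}\varphi_t$ (the unique minimizer); $V(t,x,y):=\lambda\sqrt{\varepsilon(t)}(x-x_{\varepsilon(t)})+y$; and the energy function is $\mathcal{E}(t,x,y):=\varphi_t(x)-\varphi_t(x_{\varepsilon(t)})+\frac12\|V(t,x,y)\|^2$. *)

(* Defs.v *)
From HB Require Import structures.
From mathcomp Require Import all_boot all_order all_algebra.
From mathcomp Require Import all_classical all_reals all_analysis.
Set Implicit Arguments. Unset Strict Implicit. Unset Printing Implicit Defensive.
Import Order.TTheory GRing.Theory Num.Theory.
Import numFieldNormedType.Exports.
Local Open Scope classical_set_scope.
Local Open Scope ring_scope.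

(* [ip] is an inner product on H inducing the norm of H. Together with
   completeness of H (completeNormedModType) this makes H a real Hilbert space. *)
Definition is_inner_product (R : realType) (H : normedModType R)
  (ip : H -> H -> R) : Prop :=
  (forall x y, ip x y = ip y x) /\
  (forall (a : R) (x y z : H), ip (a *: x + y) z = a * ip x z + ip y z) /\
  (forall x, ip x x = `|x| ^+ 2).

Definition separable_space (R : realType) (H : normedModType R) : Prop :=
  exists D : set H, countable D /\ closure D = setT.

Definition convex_fun (R : realType) (H : normedModType R) (f : H -> R) : Prop :=
  forall (x y : H) (a : R), 0 <= a <= 1 ->
    f (a *: x + (1 - a) *: y) <= a * f x + (1 - a) * f y.

Definition argmin (R : realType) (H : normedModType R) (g : H -> R) : set H :=
  [set x | forall y, g x <= g y].

Definition min_norm_minimizer (R : realType) (H : normedModType R)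
  (f : H -> R) : H :=
  xget 0 [set x | argmin f x /\ forall y, argmin f y -> `|x| <= `|y|].

Definition phi (R : realType) (H : normedModType R) (f : H -> R)
  (eps : R -> R) (t : R) (x : H) : R :=
  f x + eps t / 2 * `|x| ^+ 2.

Definition xeps (R : realType) (H : normedModType R) (f : H -> R)
  (eps : R -> R) (t : R) : H :=
  xget 0 (argmin (phi f eps t)).

Definition Vfun (R : realType) (H : normedModType R) (f : H -> R)
  (eps : R -> R) (lambda : R) (t : R) (x y : H) : H :=
  (lambda * Num.sqrt (eps t)) *: (x - xeps f eps t) + y.

Definition Energy (R : realType) (H : normedModType R) (f : H -> R)
  (eps : R -> R) (lambda : R) (t : R) (x y : H) : R :=
  phi f eps t x - phi f eps t (xeps f eps t)
  + 1 / 2 * `|Vfun f eps lambda t x y| ^+ 2.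

(* Main.v *)
Require Import Defs.
From HB Require Import structures.
From mathcomp Require Import all_boot all_order all_algebra.
From mathcomp Require Import all_classical all_reals all_analysis.
From mathcomp Require Import ring lra.
Set Implicit Arguments. Unset Strict Implicit. Unset Printing Implicit Defensive.
Import Order.TTheory GRing.Theory Num.Theory.
Import numFieldNormedType.Exports.
Local Open Scope classical_set_scope.
Local Open Scope ring_scope.
Section IP.
Variables (R : realType) (H : completeNormedModType R) (ip : H -> H -> R).
Hypothesis Hip : is_inner_product ip.

Lemma ipDl u v z : ip (u + v) z = ip u z + ip v z.
Proof. case: Hip => _ [L _]. by have := L 1 u v z; rewrite scale1r mul1r. Qed.

Lemma ip0l z : ip 0 z = 0.
Proof. have := ipDl 0 0 z. rewrite addr0 => h; lra. Qed.

Lemma ipZl (a : R) u z : ip (a *: u) z = a * ip u z.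
Proof. case: Hip => _ [L _]. by have := L a u 0 z; rewrite !addr0 ip0l addr0. Qed.

Lemma ipDr u v z : ip z (u + v) = ip z u + ip z v.
Proof. case: Hip => S _. by rewrite S ipDl !(S z). Qed.

Lemma ipnorm x : ip x x = `|x| ^+ 2.
Proof. by case: Hip => _ [_ N]. Qed.

Lemma normD2 (u v : H) : `|u + v| ^+ 2 = `|u| ^+ 2 + 2 * ip u v + `|v| ^+ 2.
Proof.
rewrite -ipnorm ipDl !ipDr !ipnorm. case: Hip => S _. rewrite (S v u). ring.
Qed.

Lemma normZ2 (a : R) (x : H) : `|a *: x| ^+ 2 = a ^+ 2 * `|x| ^+ 2.
Proof. by rewrite normrZ exprMn real_normK // num_real. Qed.

Lemma normcvx (a : R) (x y : H) : `|a *: x + (1 - a) *: y| ^+ 2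
  = a * `|x| ^+ 2 + (1 - a) * `|y| ^+ 2 - a * (1 - a) * `|x - y| ^+ 2.
Proof.
have -> : a *: x + (1 - a) *: y = y + a *: (x - y).
  rewrite scalerBl scale1r scalerBr. set p := a *: x; set q := a *: y. by rewrite addrCA.
rewrite (normD2 y) normZ2.
have e : `|x| ^+ 2 = `|x - y| ^+ 2 + 2 * ip (x - y) y + `|y| ^+ 2.
  by rewrite -normD2 subrK.
case: Hip => S [L _].
have -> : ip y (a *: (x - y)) = a * ip (x - y) y.
  by rewrite S ipZl.
rewrite e. ring.
Qed.

End IP.

Section Seq.
Variables (R : realType) (H : completeNormedModType R).
Lemma seq_cvg (u : nat -> H) (a : nat -> R) : a @ \oo --> 0 ->
  (forall n m, `|u n - u m| ^+ 2 <= a n + a m) -> cvgn u.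
Proof.
move=> a0 hu. apply: cauchy_cvg. apply: cauchy_exP => e e0.
have e2 : 0 < e ^+ 2 / 2 by rewrite divr_gt0 // exprn_gt0.
have [N _ HN] := cvgr0_norm_lt a a0 _ e2.
exists (u N). exists N => // n /= Nn.
rewrite -ball_normE /ball_ /=.
have h1 := HN N (leqnn N). have h2 := HN n Nn. have h3 := hu N n.
have h4 := ler_norm (a N). have h5 := ler_norm (a n).
have h6 := normr_ge0 (u N - u n).
move: h1 h2 h3 h4 h5 h6 e0; set v := `|u N - u n|; set p := a N; set q := a n.
move=> *. nra.
Qed.
End Seq.

Section Min.
Variables (R : realType) (H : completeNormedModType R).
Lemma exists_min (C : set H) (g : H -> R) (c b : R) : 0 < c -> closed C ->
  C !=set0 -> continuous g -> (forall x, C x -> b <= g x) ->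
  (forall x y, C x -> C y -> C (2^-1 *: (x + y)) /\
     g (2^-1 *: (x + y)) <= (g x + g y) / 2 - c * `|x - y| ^+ 2) ->
  exists m, C m /\ forall y, C y -> g m <= g y.
Proof.
move=> c0 cC [x0 Cx0] gc gb mid.
have hS : has_inf (g @` C).
  split; first by exists (g x0), x0.
  by exists b => _ [x Cx <-]; exact: gb.
set s := inf (g @` C).
have gs : forall x, C x -> s <= g x.
  by move=> x Cx; apply: ge_inf; [exact: hS.2 | exists x].
have hu : forall n : nat, exists x, C x /\ g x < s + harmonic n.
  move=> n; have [_ [x Cx <-] lt] := inf_adherent (harmonic_gt0 n) hS.
  by exists x.
have [u Hu] := choice hu.
set a := fun n => g (u n) - s.
have a0 : a @ \oo --> 0.
  apply: (@squeeze_cvgr _ _ _ _ (cst 0) harmonic); last 2 first.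
  - exact: cvg_cst.
  - exact: cvg_harmonic.
  apply: nearW => n /=. move: (Hu n).2 (gs _ (Hu n).1).
  rewrite /a /harmonic /= => h1 h2. apply/andP; split; first by rewrite subr_ge0.
  by rewrite lerBlDl ltW.
have hcv : cvgn u.
  apply: (@seq_cvg _ _ _ (fun n => (2 * c)^-1 * a n)).
    by rewrite -(mulr0 (2 * c)^-1); apply: cvgMl_tmp.
  move=> n m /=.
  have [Cm gm] := mid _ _ (Hu n).1 (Hu m).1.
  have := gs _ Cm.
  rewrite /a -mulrDr ler_pdivlMl ?mulr_gt0 //.
  move=> *; lra.
have ul : u @ \oo --> limn u := hcv.
exists (limn u). have Cl : C (limn u).
  apply: (closed_cvg C cC _ _ ul). apply: nearW => n. exact: (Hu n).1.
split => // y Cy. apply: le_trans (gs _ Cy).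
have h1 : (g \o u) @ \oo --> g (limn u) := continuous_cvg _ (gc _) ul.
have h2 : (g \o u) @ \oo --> s.
  have -> : g \o u = (fun n => a n + s) by apply: funext => n /=; rewrite /a subrK.
  rewrite -[X in _ --> X]add0r. apply: cvgD => //. exact: cvg_cst.
by rewrite (norm_cvg_unique (h1 _) h2).
Qed.
End Min.

Section Main.
Variables (R : realType) (H : completeNormedModType R) (ip : H -> H -> R)
  (f : H -> R) (eps : R -> R) (t0 : R).
Hypotheses (Hip : is_inner_product ip) (fcvx : convex_fun f)
  (fc : continuous f) (amin : argmin f !=set0)
  (epos : forall t, t0 <= t -> 0 < eps t)
  (edec : forall s t, t0 <= s -> s <= t -> eps t <= eps s)
  (elim : eps @ +oo --> 0).

Local Notation phi := (phi f eps).
Local Notation xe := (xeps f eps).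

Lemma phi_cvx t a (x y : H) : 0 <= a <= 1 ->
  phi t (a *: x + (1 - a) *: y) <= a * phi t x + (1 - a) * phi t y
     - eps t / 2 * (a * (1 - a)) * `|x - y| ^+ 2.
Proof.
move=> ha. rewrite /Defs.phi (normcvx Hip). have := fcvx x y ha. lra.
Qed.

Lemma mid_eq (x y : H) : 2^-1 *: (x + y) = 2^-1 *: x + (1 - 2^-1) *: y.
Proof.
have -> : (1 - 2^-1 : R) = 2^-1 by field.
by rewrite scalerDr.
Qed.

Lemma half_in : (0 : R) <= 2^-1 <= (1 : R).
Proof. apply/andP; split; [by rewrite invr_ge0 | by rewrite invf_le1 // ler1n]. Qed.

Lemma sq_cont : continuous (fun x : H => `|x| ^+ 2).
Proof.
move=> x. have h1 := @norm_continuous _ H x. have h2 := @exprn_continuous R 2 `|x|. have := continuous_comp h1 h2. by [].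
Qed.

Lemma phi_cont t : continuous (phi t).
Proof.
move=> x. rewrite /Defs.phi. apply: cvgD; first exact: fc.
apply: cvgMl_tmp. exact: sq_cont.
Qed.

Lemma xeps_min t : t0 <= t -> forall y, phi t (xe t) <= phi t y.
Proof.
move=> tt. have [x0 hx0] := amin. have e0 := epos tt.
have : exists m, setT m /\ forall y, setT y -> phi t m <= phi t y.
  apply: (@exists_min _ _ setT (phi t) (eps t / 8) (f x0)).
  - by rewrite divr_gt0.
  - exact: closedT.
  - by exists 0.
  - exact: phi_cont.
  - move=> y _. rewrite /Defs.phi. have := hx0 y.
    have : 0 <= eps t / 2 * `|y| ^+ 2 by rewrite mulr_ge0 // divr_ge0 // ltW.
    lra.
  - move=> x y _ _; split => //. rewrite mid_eq.
    have := phi_cvx t x y half_in.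
    have -> : (1 - 2^-1 : R) = 2^-1 by field.
    have -> : eps t / 2 * (2^-1 * 2^-1) = eps t / 8 by field.
    lra.
case=> m [_ hm].
have : argmin (phi t) (xe t).
  apply: (xgetPex 0 (P := argmin (phi t))). exists m => y. exact: hm.
done.
Qed.

Lemma xeps_strong t (x : H) : t0 <= t ->
  eps t / 2 * `|x - xe t| ^+ 2 <= phi t x - phi t (xe t).
Proof.
move=> tt. have e0 := epos tt. set m := xe t.
set k := eps t / 2 * `|x - m| ^+ 2. set D := phi t x - phi t m.
have hk : forall a, 0 < a <= 1 -> k * (1 - a) <= D.
  move=> a /andP[a0 a1].
  have h1 := xeps_min tt (a *: x + (1 - a) *: m).
  have h2 := phi_cvx t x m (introT andP (conj (ltW a0) a1)).
  rewrite -(ler_pM2l a0). rewrite /k /D. rewrite -/m in h1 h2. lra.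
have D0 : 0 <= D by have := hk 1; rewrite ltr01 lexx subrr mulr0; apply.
apply/ler_addgt0Pr => e ep.
case: (leP k e) => h; first lra.
have k0 : 0 < k by lra.
have := hk (e / k). rewrite divr_gt0 // ler_pdivrMr // mul1r ltW //.
have -> : k * (1 - e / k) = k - e by field; rewrite lt0r_neq0.
move=> /(_ isT). lra.
Qed.

Local Notation xs := (min_norm_minimizer f).

Lemma argmin_closed : closed (argmin f).
Proof.
have [x0 hx0] := amin.
have -> : argmin f = f @^-1` [set r | r <= f x0].
  apply/seteqP; split => x /=; first by move=> h; exact: h x0.
  by move=> h y; apply: le_trans h (hx0 y).
apply: preimage_closed; [move=> x _; exact: fc | exact: closed_le].
Qed.

Lemma sq_le (a b : R) : 0 <= a -> 0 <= b -> a ^+ 2 <= b ^+ 2 -> a <= b.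
Proof. move=> a0 b0 h. rewrite leNgt; apply/negP => h2. nra. Qed.

Lemma le_sq (a b : R) : 0 <= a -> a <= b -> a ^+ 2 <= b ^+ 2.
Proof. move=> a0 h. nra. Qed.

Lemma mnm_spec : argmin f xs /\ forall y, argmin f y -> `|xs| <= `|y|.
Proof.
have [x0 hx0] := amin.
have : exists m, argmin f m /\ forall y, argmin f y -> `|m| ^+ 2 <= `|y| ^+ 2.
  apply: (@exists_min _ _ (argmin f) (fun x => `|x| ^+ 2) (4^-1) 0).
  - by rewrite invr_gt0.
  - exact: argmin_closed.
  - by exists x0.
  - exact: sq_cont.
  - by move=> x _; rewrite exprn_ge0.
  - move=> x y hx hy; split.
      move=> z. rewrite mid_eq. apply: le_trans (fcvx x y half_in) _.
      have := hx z; have := hy z.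
      have -> : (1 - 2^-1 : R) = 2^-1 by field.
      lra.
    rewrite mid_eq (normcvx Hip).
    have -> : (1 - 2^-1 : R) = 2^-1 by field.
    lra.
case=> m [hm hmin].
apply: (xgetPex 0 (P := [set x | argmin f x /\ forall y, argmin f y -> `|x| <= `|y|])).
exists m; split => // y hy. apply: sq_le => //. exact: hmin.
Qed.

Lemma inf_argmin x : argmin f x -> inf (range f) = f x.
Proof.
move=> h. apply/eqP; rewrite eq_le; apply/andP; split.
- apply: (ge_inf _); last by exists x.
  by exists (f x) => _ [y _ <-]; exact: h y.
- apply: lb_le_inf; first by exists (f x), x.
  by move=> _ [y _ <-]; exact: h y.
Qed.

Lemma part12 lam t (x y : H) : t0 <= t ->
  f x - inf (range f) <= Energy f eps lam t x y + eps t / 2 * `|xs| ^+ 2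
  /\ `|x - xe t| ^+ 2 <= 2 * Energy f eps lam t x y / eps t.
Proof.
move=> tt. have e0 := epos tt. have [xsa _] := mnm_spec.
have hV : 0 <= 1 / 2 * `|Vfun f eps lam t x y| ^+ 2 by rewrite mulr_ge0 // ?exprn_ge0.
split.
- rewrite (inf_argmin xsa) /Energy.
  have := xeps_min tt xs.
  have : 0 <= eps t / 2 * `|x| ^+ 2 by rewrite mulr_ge0 // ?exprn_ge0 // divr_ge0 // ltW.
  rewrite /Defs.phi. lra.
- rewrite ler_pdivlMr // /Energy.
  have := xeps_strong x tt. lra.
Qed.

Lemma xe_norm t : t0 <= t -> `|xe t - xs| ^+ 2 <= `|xs| ^+ 2 - `|xe t| ^+ 2.
Proof.
move=> tt. have e0 := epos tt. have [xsa _] := mnm_spec.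
have h := xeps_strong xs tt. have h2 := xsa (xe t).
rewrite distrC. rewrite -(ler_pM2l (_ : 0 < eps t / 2)); last by rewrite divr_gt0.
move: h; rewrite /Defs.phi. lra.
Qed.

Lemma xe_mono s t : t0 <= s -> s <= t ->
  `|xe t - xe s| ^+ 2 <= `|xe t| ^+ 2 - `|xe s| ^+ 2.
Proof.
move=> ts st. have tt : t0 <= t by apply: le_trans st.
have e0 := epos ts. have e0' := epos tt. have ee := edec ts st.
have h1 := xeps_strong (xe t) ts. have h2 := xeps_strong (xe s) tt.
move: h1 h2; rewrite /Defs.phi (distrC (xe s)).
set D := `|xe t - xe s| ^+ 2. set Q := `|xe t| ^+ 2 - `|xe s| ^+ 2.
have D0 : 0 <= D by rewrite exprn_ge0.
move=> h1 h2.
have h : (eps s + eps t) * D <= (eps s - eps t) * Q.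
  rewrite /Q. lra.
case: (ltrP (eps t) (eps s)) => ee2.
- case: (leP 0 Q) => hQ; nra.
- have ee3 : eps t = eps s by apply/eqP; rewrite eq_le ee ee2.
  rewrite ee3 subrr mul0r in h.
  have DD : D = 0 by nra.
  move: DD; rewrite /D /Q => /eqP; rewrite sqrf_eq0 normr_eq0 subr_eq0 => /eqP ->.
  by rewrite subrr normr0 expr0n /= subrr.
Qed.

Lemma tikhonov : xe t @[t --> +oo] --> xs.
Proof.
have [xsa xsm] := mnm_spec.
set S := [set r | exists2 t, t0 <= t & r = `|xe t| ^+ 2].
have hS : has_sup S.
  split; first by exists (`|xe t0| ^+ 2), t0.
  exists (`|xs| ^+ 2) => _ [t tt ->].
  have := xe_norm tt. have : 0 <= `|xe t - xs| ^+ 2 by rewrite exprn_ge0. lra.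
have cv : cvg (xe t @[t --> +oo]).
  apply: cauchy_cvg. apply: cauchy_exP => e e0.
  have e2 : 0 < e ^+ 2 by rewrite exprn_gt0.
  have [_ [s ts ->] hs] := sup_adherent e2 hS.
  exists (xe s). exists s; split; first exact: num_real.
  move=> t st. rewrite -ball_normE /ball_ /=.
  have tt : t0 <= t by apply: le_trans (ltW st).
  have h1 := xe_mono ts (ltW st).
  have h2 : `|xe t| ^+ 2 <= sup S by apply: sup_upper_bound => //; exists t.
  rewrite distrC. apply: (@le_lt_trans _ _ (`|xe t - xe s|)) => //.
  rewrite ltNge; apply/negP => h3.
  have := normr_ge0 (xe t - xe s). move: h1 h2 hs h3.
  set v := `|xe t - xe s|. move=> *. nra.
set z := lim (xe t @[t --> +oo]).
have hz : xe t @[t --> +oo] --> z := cv.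
have nt0 : \forall t \near +oo, t0 <= t.
  exists t0; split; first exact: num_real. by move=> t /ltW.
have fz : f z <= f xs.
  have h1 : (f \o xe) t @[t --> +oo] --> f z by apply: continuous_cvg => //; exact: fc.
  have h2 : eps t / 2 * `|xs| ^+ 2 @[t --> +oo] --> 0 / 2 * `|xs| ^+ 2.
    by apply: cvgMr_tmp; apply: cvgMr_tmp.
  rewrite !mul0r in h2.
  have h3 : f (xe t) - eps t / 2 * `|xs| ^+ 2 @[t --> +oo] --> f z - 0 by apply: cvgB.
  suff : f z - 0 <= f xs by rewrite subr0.
  apply: (closed_cvg _ (@closed_le _ (f xs)) _ _ h3).
  near=> t. have tt : t0 <= t by near: t.
  rewrite /=. have := xeps_min tt xs. rewrite /Defs.phi.
  have : 0 <= eps t / 2 * `|xe t| ^+ 2.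
    by rewrite mulr_ge0 // ?exprn_ge0 // divr_ge0 // ltW // epos.
  lra.
have za : argmin f z by move=> y; apply: le_trans fz (xsa y).
have nz : `|z| <= `|xs|.
  have h1 : (Num.norm \o xe) t @[t --> +oo] --> `|z| by apply: continuous_cvg => //; exact: norm_continuous.
  apply: (closed_cvg [set r : R | r <= `|xs|] (@closed_le _ `|xs|) _ _ h1).
  near=> t. have tt : t0 <= t by near: t.
  rewrite /=. apply: sq_le => //. have := xe_norm tt.
  have : 0 <= `|xe t - xs| ^+ 2 by rewrite exprn_ge0. lra.
have zx : z = xs.
  set w := 2^-1 *: (z + xs).
  have wa : argmin f w.
    move=> y. rewrite /w mid_eq. apply: le_trans (fcvx z xs half_in) _.
    have := za y; have := xsa y.
    have -> : (1 - 2^-1 : R) = 2^-1 by field.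
    lra.
  have h1 := le_sq (normr_ge0 _) (xsm _ wa).
  have h2 := le_sq (normr_ge0 _) nz.
  move: h1; rewrite /w mid_eq (normcvx Hip).
  have -> : (1 - 2^-1 : R) = 2^-1 by field.
  move=> h1.
  have : `|z - xs| ^+ 2 <= 0 by lra.
  move=> h; have : `|z - xs| ^+ 2 == 0 by rewrite eq_le h exprn_ge0.
  by rewrite sqrf_eq0 normr_eq0 subr_eq0 => /eqP.
by rewrite -zx.
Unshelve. all: by end_near.
Qed.

End Main.
Unset Implicit Arguments.
Set Strict Implicit.

Theorem mainTheorem3 (R : realType) (H : completeNormedModType R)
  (ip : H -> H -> R) (f : H -> R) (grad : H -> H) (L : R)
  (eps : R -> R) (t0 delta lambda : R)
  (d : measure_display) (Omega : measurableType d) (P : probability Omega R)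
  (X Y : Omega -> R -> H) :
  is_inner_product ip ->
  separable_space H ->
  0 < t0 ->
  convex_fun f ->
  (forall x, differentiable f x /\
     forall u, ('d f x : H -> R) u = ip (grad x) u) ->
  0 < L ->
  (forall x y, `|grad x - grad y| <= L * `|x - y|) ->
  argmin f !=set0 ->
  (forall t, t0 <= t -> 0 < eps t) ->
  (forall s t, t0 <= s -> s <= t -> eps t <= eps s) ->
  (forall t, t0 <= t -> derivable eps t 1) ->
  {within `[t0, +oo[, continuous (derive1 eps)} ->
  eps @ +oo --> 0 ->
  0 < delta -> 0 < lambda ->
  (forall w t, t0 <= t ->
     f (X w t) - inf (range f)
       <= Energy f eps lambda t (X w t) (Y w t)
          + eps t / 2 * `|min_norm_minimizer f| ^+ 2
   /\ `|X w t - xeps f eps t| ^+ 2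
       <= 2 * Energy f eps lambda t (X w t) (Y w t) / eps t)
  /\
  ({ae P, forall w,
      (fun t => Energy f eps lambda t (X w t) (Y w t) / eps t) @ +oo --> 0} ->
   {ae P, forall w, X w @ +oo --> min_norm_minimizer f}).
Proof.
move=> Hip _ _ fcvx hd _ _ amin epos edec _ _ elim _ _.
have fc : continuous f by move=> x; exact: differentiable_continuous (hd x).1.
split.
  move=> w t tt. exact: (part12 Hip fcvx fc amin epos lambda (X w t) (Y w t) tt).
move=> hae. apply: filterS hae => w hw.
have tk : xeps f eps t @[t --> +oo] --> min_norm_minimizer f :=
  tikhonov Hip fcvx fc amin epos edec elim.
apply/cvgrPdist_lt => e e0.
have e2 : 0 < e / 2 by rewrite divr_gt0.
have e8 : 0 < e ^+ 2 / 8 by rewrite divr_gt0 // exprn_gt0.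
move/cvgrPdist_lt: tk => /(_ _ e2) A.
have B : \forall t \near +oo,
    `|Energy f eps lambda t (X w t) (Y w t) / eps t| < e ^+ 2 / 8.
  by apply: (cvgr0_norm_lt _ hw).
have C : \forall t \near +oo, t0 <= t.
  exists t0; split; first exact: num_real. by move=> s /ltW.
near=> t.
have tt : t0 <= t by near: t.
have [_ P2] := part12 Hip fcvx fc amin epos lambda (X w t) (Y w t) tt.
have a1 : `|min_norm_minimizer f - xeps f eps t| < e / 2 by near: t.
have b1 : `|Energy f eps lambda t (X w t) (Y w t) / eps t| < e ^+ 2 / 8 by near: t.
have := ler_distD (xeps f eps t) (min_norm_minimizer f) (X w t).
have c1 : `|xeps f eps t - X w t| < e / 2.
  rewrite distrC. move: P2. rewrite -mulrA.
  have := ler_norm (Energy f eps lambda t (X w t) (Y w t) / eps t).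
  have := normr_ge0 (X w t - xeps f eps t).
  set v := `|X w t - xeps f eps t|. set q := Energy f eps lambda t (X w t) (Y w t) / eps t.
  move=> *. nra.
lra.
Unshelve. all: by end_near.
Qed.
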